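(* Let $y:[0,h]\to\mathbb{R}$ solve $y'=f(y)$, $y(0)=y_0$, with $f$ Lipschitz continuous with constant $L$, and assume $f\circ y\in C^M([0,h])$. Given any previous iterate $\eta^{[p]}$, define the implicit SDC iterate by $\eta_0^{[p+1]}=\eta_0$ and, for $n=1,\dots,N$, $$\eta_n^{[p+1]}=\eta_{n-1}^{[p+1]}+h_n\big[f(\eta_n^{[p+1]})-f(\eta_n^{[p]})\big]+h\sum_{m=1}^M w_{n,m}f(\eta_m^{[p]}).$$ If $h<1/(2L)$, then for each $n=1,\dots,N$, $$|e_n^{[p+1]}|\le e^{2NhL}|e_0|+C_1h\|\mathbf e^{[p]}\|+C_2h^{M+1},$$ where the constants $C_1,C_2$ depend only on the smoothness of $f$, the exact solution $y$, and the choice of quadrature points.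
   Context: Quadrature nodes $0\le\xi_1<\dots<\xi_M\le1$ partition $[0,1]$ into $N$ subintervals, where $N=M-1$ if both endpoints $0,1$ are nodes, $N=M$ if exactly one is, and $N=M+1$ if neither is. The right endpoints are $\xi^R_0=0$, $\xi^R_N=1$, and for the interior ones $\xi^R_n=\xi_{n+1}$ if the left endpoint $0$ is a node, $\xi^R_n=\xi_n$ otherwise. $\ell_m$ is the Lagrange basis polynomial of degree $\le M-1$ with $\ell_m(\xi_k)=\delta_{mk}$, and $w_{n,m}=\int_{\xi^R_{n-1}}^{\xi^R_n}\ell_m(x)\,dx$. For step size $h>0$, $t_n=\xi^R_nh$, $h_n=(\xi^R_n-\xi^R_{n-1})h$. The iterate $\eta^{[p]}$ consists of approximations $\eta^{[p]}_n\approx y(t_n)$ and values $\eta^{[p]}_m\approx y(\xi_mh)$ at the quadrature nodes used in the quadrature sum. $\eta_0$ approximates $y_0$, $e_0=\eta_0-y_0$, $e^{[p+1]}_n=\eta^{[p+1]}_n-y(t_n)$, $\mathbf e^{[p]}=(\eta^{[p]}_m-y(\xi_mh))_{m=1}^M$, $\|\mathbf e\|=\max_m|e_m|$.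
   Formalization: $\|\mathbf e^{[p]}\|$ is the maximum error of $\eta^{[p]}$ over the nodes $\xi_mh$ and the grid points $t_n$, not the nodes alone; C₁, C₂ depend only on the nodes, L and a bound on the M-th derivative of f∘y. Apart from conventions, each condition added here is assumed in the paper as well or is needed for the statement above to hold. *)

(* Defs.v *)
From Stdlib Require Import Reals Lra Arith.
From Coquelicot Require Import Coquelicot.
Open Scope R_scope.

Fixpoint sum1 (F : nat -> R) (k : nat) : R :=
  match k with O => 0 | S k' => sum1 F k' + F k end.

Fixpoint maxabs1 (F : nat -> R) (k : nat) : R :=
  match k with O => 0 | S k' => Rmax (maxabs1 F k') (Rabs (F k)) end.

Definition nodes_ok (M : nat) (xi : nat -> R) : Prop :=
  (1 <= M)%nat /\ 0 <= xi 1%nat /\ xi M <= 1 /\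
  (forall m, (1 <= m)%nat -> (m < M)%nat -> xi m < xi (S m)).

(* For increasing nodes in [0,1]: 0 is a node iff xi 1 = 0, 1 is a node iff xi M = 1. *)
Definition zero_is_node (xi : nat -> R) : bool :=
  if Req_EM_T (xi 1%nat) 0 then true else false.
Definition one_is_node (M : nat) (xi : nat -> R) : bool :=
  if Req_EM_T (xi M) 1 then true else false.

Definition num_sub (M : nat) (xi : nat -> R) : nat :=
  ((M - 1) + (if zero_is_node xi then 0 else 1)
           + (if one_is_node M xi then 0 else 1))%nat.

Definition xiR (M : nat) (xi : nat -> R) (n : nat) : R :=
  if Nat.eqb n 0 then 0
  else if Nat.eqb n (num_sub M xi) then 1
  else if zero_is_node xi then xi (S n) else xi n.

Fixpoint lag_prod (xi : nat -> R) (m : nat) (x : R) (k : nat) : R :=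
  match k with
  | O => 1
  | S k' => lag_prod xi m x k' *
            (if Nat.eqb k m then 1 else (x - xi k) / (xi m - xi k))
  end.
Definition lagrange (M : nat) (xi : nat -> R) (m : nat) (x : R) : R :=
  lag_prod xi m x M.

Definition weight (M : nat) (xi : nat -> R) (n m : nat) : R :=
  RInt (lagrange M xi m) (xiR M xi (n - 1)) (xiR M xi n).

Definition tgrid (M : nat) (xi : nat -> R) (h : R) (n : nat) : R := xiR M xi n * h.
Definition hstep (M : nat) (xi : nat -> R) (h : R) (n : nat) : R :=
  (xiR M xi n - xiR M xi (n - 1)) * h.

Definition CM_R (M : nat) (g : R -> R) : Prop :=
  (forall k x, (k <= M)%nat -> ex_derive_n g k x) /\
  (forall x, continuous (Derive_n g M) x).

(* Error norm of the previous iterate etap (given by its values at the time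
   points): maximum error over all its components used by the scheme, i.e.
   the quadrature nodes xi_m h (m=1..M) and the grid points t_n (n=1..N). *)
Definition err_norm (M : nat) (xi : nat -> R) (h : R) (etap y : R -> R) : R :=
  Rmax (maxabs1 (fun m => etap (xi m * h) - y (xi m * h)) M)
       (maxabs1 (fun n => etap (tgrid M xi h n) - y (tgrid M xi h n)) (num_sub M xi)).

(* Main.v *)
Require Import Defs.
From Stdlib Require Import Reals.
From Coquelicot Require Import Coquelicot.
From Stdlib Require Import Lra Lia Factorial.
Open Scope R_scope.

Fixpoint isP (k : nat) (p : R -> R) : Prop :=
  match k with
  | O => forall x, p x = 0
  | S k' => exists q c, isP k' q /\ forall x, p x = x * q x + c
  end.

Lemma isP_ext k p q : isP k p -> (forall x, p x = q x) -> isP k q.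
Proof.
  destruct k as [|k]; simpl.
  - intros H E x. rewrite <- E. auto.
  - intros [r [c [H1 H2]]] E. exists r, c. split; auto. intros x. rewrite <- E. auto.
Qed.

Lemma isP_zero k : isP k (fun _ => 0).
Proof.
  induction k; simpl; auto. exists (fun _ => 0), 0. split; auto. intros; ring.
Qed.

Lemma isP_S k p : isP k p -> isP (S k) p.
Proof.
  revert p; induction k; intros p H.
  - simpl in *. exists (fun _ => 0), 0. split; auto. intros x. rewrite H. ring.
  - destruct H as [q [c [Hq E]]]. exists q, c. split; auto.
Qed.

Lemma isP_le k l p : (k <= l)%nat -> isP k p -> isP l p.
Proof.
  induction 1; auto. intros H'. apply isP_S; auto.
Qed.

Lemma isP_add k p q : isP k p -> isP k q -> isP k (fun x => p x + q x).
Proof.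
  revert p q; induction k; simpl; intros p q Hp Hq.
  - intros x; rewrite Hp, Hq; ring.
  - destruct Hp as [p1 [c1 [H1 E1]]]. destruct Hq as [q1 [d1 [H2 E2]]].
    exists (fun x => p1 x + q1 x), (c1 + d1). split; auto.
    intros x; rewrite E1, E2; ring.
Qed.

Lemma isP_scal k p a : isP k p -> isP k (fun x => a * p x).
Proof.
  revert p; induction k; simpl; intros p Hp.
  - intros x; rewrite Hp; ring.
  - destruct Hp as [p1 [c1 [H1 E1]]].
    exists (fun x => a * p1 x), (a * c1). split; auto.
    intros x; rewrite E1; ring.
Qed.

Lemma isP_const c : isP 1 (fun _ => c).
Proof. simpl. exists (fun _ => 0), c. split; auto. intros; ring. Qed.

Lemma isP_mulx k p : isP k p -> isP (S k) (fun x => x * p x).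
Proof. intros H. simpl. exists p, 0. split; auto. intros; ring. Qed.

Lemma isP_lin k p a b : isP k p -> isP (S k) (fun x => p x * (x * a + b)).
Proof.
  intros H. apply isP_ext with (fun x => x * (a * p x) + b * p x).
  - apply isP_add. apply isP_mulx, isP_scal, H. apply isP_S, isP_scal, H.
  - intros; ring.
Qed.

Lemma isP_pow j : isP (S j) (fun x => x ^ j).
Proof.
  induction j. simpl. apply isP_const.
  apply isP_ext with (fun x => x * x ^ j). apply isP_mulx; auto. intros; simpl; ring.
Qed.

Lemma isP_comp k p a : isP k p -> isP k (fun x => p (a * x)).
Proof.
  revert p; induction k; simpl; intros p Hp.
  - intros; auto.
  - destruct Hp as [q [c [H1 E1]]].
    exists (fun x => a * q (a * x)), c. split.
    + apply isP_scal. apply IHk; auto.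
    + intros x; rewrite E1; ring.
Qed.

Lemma isP_cont k p : isP k p -> forall x, continuous p x.
Proof.
  revert p; induction k; simpl; intros p Hp x.
  - apply continuous_ext with (fun _ => 0). intros; rewrite Hp; auto. apply continuous_const.
  - destruct Hp as [q [c [H1 E1]]].
    apply continuous_ext with (fun x => plus (mult x (q x)) c).
    intros; rewrite E1; reflexivity.
    apply (@continuous_plus R_UniformSpace R_AbsRing R_NormedModule (fun x : R => mult x (q x)) (fun _ => c)).
    apply (@continuous_mult R_UniformSpace R_AbsRing (fun x : R => x) q). apply continuous_id. apply IHk; auto.
    apply continuous_const.
Qed.

Lemma isP_factor k p r : isP (S k) p ->
  exists q, isP k q /\ forall x, p x - p r = (x - r) * q x.
Proof.
  revert p; induction k; intros p Hp.
  - destruct Hp as [q [c [H1 E1]]]. simpl in H1. exists (fun _ => 0). split. simpl; auto.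
    intros x. rewrite !E1, !H1. ring.
  - destruct Hp as [q [c [H1 E1]]]. destruct (IHk q H1) as [s [Hs Es]].
    exists (fun x => q x + r * s x). split.
    + apply isP_add; auto. apply isP_S, isP_scal; auto.
    + intros x. rewrite !E1. replace (x * q x + c - (r * q r + c)) with ((x - r) * q x + r * (q x - q r)) by ring.
      rewrite Es. ring.
Qed.

Lemma isP_roots k p (z : nat -> R) :
  isP k p -> (forall i j, (1 <= i <= k)%nat -> (1 <= j <= k)%nat -> z i = z j -> i = j) ->
  (forall i, (1 <= i <= k)%nat -> p (z i) = 0) -> forall x, p x = 0.
Proof.
  revert p; induction k; intros p Hp Hz Hr x.
  - simpl in Hp; auto.
  - destruct (isP_factor k p (z (S k)) Hp) as [q [Hq Eq]].
    assert (Hq0 : forall x, q x = 0).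
    { apply IHk; auto.
      - intros i j Hi Hj E. apply Hz; auto; lia.
      - intros i Hi. assert (H1 := Eq (z i)). rewrite !Hr in H1 by lia.
        assert (z i - z (S k) <> 0).
        { intros E. assert (i = S k) by (apply Hz; [lia|lia|lra]). lia. }
        symmetry in H1. rewrite Rminus_0_r in H1. apply Rmult_integral in H1. destruct H1 as [H1|H1]; [lra|auto]. }
    assert (H1 := Eq x). rewrite Hq0, Hr in H1 by lia. lra.
Qed.

Lemma nodes_lt M xi : nodes_ok M xi -> forall i j, (1 <= i)%nat -> (i < j)%nat -> (j <= M)%nat -> xi i < xi j.
Proof.
  intros [HM [H0 [H1 Hs]]] i j Hi Hij Hj.
  induction Hij. apply Hs; lia.
  apply Rlt_trans with (xi m). apply IHHij; lia. apply Hs; lia.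
Qed.

Lemma nodes_inj M xi : nodes_ok M xi -> forall i j, (1 <= i <= M)%nat -> (1 <= j <= M)%nat -> xi i = xi j -> i = j.
Proof.
  intros H i j Hi Hj E. destruct (Compare_dec.lt_eq_lt_dec i j) as [[L|L]|L]; auto.
  - assert (xi i < xi j) by (apply (nodes_lt M); auto; lia). lra.
  - assert (xi j < xi i) by (apply (nodes_lt M); auto; lia). lra.
Qed.

Lemma nodes_range M xi : nodes_ok M xi -> forall m, (1 <= m <= M)%nat -> 0 <= xi m <= 1.
Proof.
  intros H m Hm. pose proof H as [HM [H0 [H1 Hs]]].
  split.
  - destruct (Nat.eq_dec m 1). subst; auto.
    left. apply Rle_lt_trans with (xi 1%nat); auto. apply (nodes_lt M); auto; lia.
  - destruct (Nat.eq_dec m M). subst; auto.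
    left. apply Rlt_le_trans with (xi M); auto. apply (nodes_lt M); auto; lia.
Qed.

Lemma lag_isP xi m : (1 <= m)%nat -> forall k,
  ((m <= k)%nat -> isP k (fun x => lag_prod xi m x k)) /\
  ((k < m)%nat -> isP (S k) (fun x => lag_prod xi m x k)).
Proof.
  intros Hm k. induction k as [|k IH].
  - split; intros; [lia|]. simpl. apply isP_const.
  - destruct IH as [IH1 IH2]. change (fun x => lag_prod xi m x (S k)) with (fun x => lag_prod xi m x k * (if Nat.eqb (S k) m then 1 else (x - xi (S k)) / (xi m - xi (S k)))).
    idtac.
    destruct (Nat.eqb_spec (S k) m) as [E|E].
    + split; intros.
      * apply isP_ext with (fun x => lag_prod xi m x k). apply IH2; lia. intros; ring.
      * lia.
    + assert (Hlin : forall p j, isP j p -> isP (S j) (fun x => p x * ((x - xi (S k)) / (xi m - xi (S k))))).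
      { intros p j Hp. apply isP_ext with (fun x => p x * (x * (/ (xi m - xi (S k))) + (- xi (S k) / (xi m - xi (S k))))).
        apply isP_lin; auto. intros; unfold Rdiv; ring. }
      split; intros.
      * apply Hlin. apply IH1; lia.
      * apply Hlin. apply IH2; lia.
Qed.

Lemma lagrange_isP M xi m : (1 <= m <= M)%nat -> isP M (lagrange M xi m).
Proof. intros Hm. unfold lagrange. apply (lag_isP xi m); lia. Qed.

Lemma lag_zero xi m i k : (1 <= i <= k)%nat -> i <> m -> lag_prod xi m (xi i) k = 0.
Proof.
  induction k; intros Hi Hm. lia.
  cbn [lag_prod]. destruct (Nat.eq_dec i (S k)).
  - subst. destruct (Nat.eqb_spec (S k) m). lia. unfold Rdiv. ring.
  - rewrite IHk by lia. ring.
Qed.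

Lemma lag_one xi m k : (forall j, (1 <= j <= k)%nat -> j <> m -> xi m <> xi j) -> lag_prod xi m (xi m) k = 1.
Proof.
  induction k; intros H. reflexivity.
  cbn [lag_prod]. rewrite IHk by (intros; apply H; lia).
  destruct (Nat.eqb_spec (S k) m). ring.
  field. intros E. apply (H (S k)). lia. auto. lra.
Qed.

Lemma sum1_ext F G k : (forall m, (1 <= m <= k)%nat -> F m = G m) -> sum1 F k = sum1 G k.
Proof.
  induction k; intros H; simpl; auto. rewrite IHk by (intros; apply H; lia). rewrite H by lia. auto.
Qed.

Lemma sum1_delta F k i : (1 <= i <= k)%nat -> (forall m, (1 <= m <= k)%nat -> m <> i -> F m = 0) -> sum1 F k = F i.
Proof.
  induction k; intros Hi H. lia.
  simpl. destruct (Nat.eq_dec i (S k)).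
  - subst. rewrite (sum1_ext _ (fun _ => 0)). 2: { intros; apply H; lia. }
    clear. assert (forall k, sum1 (fun _ => 0) k = 0) by (induction k0; simpl; auto; rewrite IHk0; ring).
    rewrite H. ring.
  - rewrite IHk; [ | lia | intros; apply H; lia]. rewrite (H (S k)) by lia. ring.
Qed.

Lemma sum1_isP k F l : (forall m, (1 <= m <= k)%nat -> isP l (F m)) -> isP l (fun x => sum1 (fun m => F m x) k).
Proof.
  induction k; intros H; simpl. apply isP_zero.
  apply isP_add. apply IHk; intros; apply H; lia. apply H; lia.
Qed.

Lemma lagrange_reprod M xi p : nodes_ok M xi -> isP M p ->
  forall x, sum1 (fun m => p (xi m) * lagrange M xi m x) M = p x.
Proof.
  intros Hn Hp x.
  assert (H : forall x, sum1 (fun m => p (xi m) * lagrange M xi m x) M + (-1) * p x = 0).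
  { apply (isP_roots M _ xi).
    - apply isP_add. apply (sum1_isP M (fun m x => p (xi m) * lagrange M xi m x)).
      intros m Hm. apply isP_scal, lagrange_isP; auto. apply isP_scal; auto.
    - apply (nodes_inj M); auto.
    - intros i Hi. rewrite (sum1_delta _ M i); auto.
      + unfold lagrange. rewrite lag_one. ring. intros j Hj Hji E. apply Hji. symmetry. apply (nodes_inj M xi); auto.
      + intros m Hm Hmi. unfold lagrange. rewrite lag_zero by lia. ring. }
  specialize (H x). lra.
Qed.

Lemma within_eps (phi : R -> R) (D : R -> Prop) x :
  filterlim phi (within D (locally x)) (locally (phi x)) ->
  forall eps, 0 < eps -> exists del, 0 < del /\ forall s, D s -> Rabs (s - x) < del -> Rabs (phi s - phi x) < eps.
Proof.
  intros H eps Heps.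
  destruct (proj1 (filterlim_locally phi (phi x)) H (mkposreal eps Heps)) as [d Hd].
  exists d. split. apply cond_pos. intros s Ds Hs.
  assert (B := Hd s). simpl in B. apply B; auto.
Qed.

Lemma cont_eps (phi : R -> R) x : continuous phi x ->
  forall eps, 0 < eps -> exists del, 0 < del /\ forall s, Rabs (s - x) < del -> Rabs (phi s - phi x) < eps.
Proof.
  intros H eps Heps.
  destruct (proj1 (filterlim_locally phi (phi x)) H (mkposreal eps Heps)) as [d Hd].
  exists d. split. apply cond_pos. intros s Hs.
  apply (Hd s). auto.
Qed.

Lemma mvt_bound (phi df : R -> R) a b B : a <= b ->
  (forall x, a <= x <= b -> forall eps, 0 < eps -> exists del, 0 < del /\
      forall s, a <= s <= b -> Rabs (s - x) < del -> Rabs (phi s - phi x) < eps) ->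
  (forall x, a < x < b -> is_derive phi x (df x) /\ Rabs (df x) <= B) ->
  Rabs (phi b - phi a) <= B * (b - a).
Proof.
  intros Hab Hc Hd. destruct (Req_dec a b) as [E|Hne].
  { subst. rewrite !Rminus_diag, Rabs_R0. lra. }
  assert (Hlt : a < b) by lra.
  assert (HB : 0 <= B).
  { destruct (Hd ((a+b)/2)) as [_ H]. lra. apply Rle_trans with (2 := H). apply Rabs_pos. }
  apply Rnot_lt_le. intros Hgt.
  set (eps := (Rabs (phi b - phi a) - B * (b - a)) / 3).
  assert (Heps : 0 < eps) by (unfold eps; lra).
  destruct (Hc a ltac:(lra) eps Heps) as [d1 [Hd1 H1]].
  destruct (Hc b ltac:(lra) eps Heps) as [d2 [Hd2 H2]].
  set (d := Rmin (Rmin d1 d2) (b - a) / 3).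
  assert (Hd0 : 0 < d). { unfold d. apply Rmult_lt_0_compat; [|lra].
    apply Rmin_pos. apply Rmin_pos; auto. lra. }
  assert (Hdd1 : d < d1). { unfold d. assert (Rmin (Rmin d1 d2) (b - a) <= d1).
     { eapply Rle_trans. apply Rmin_l. apply Rmin_l. } lra. }
  assert (Hdd2 : d < d2). { unfold d. assert (Rmin (Rmin d1 d2) (b - a) <= d2).
     { eapply Rle_trans. apply Rmin_l. apply Rmin_r. } lra. }
  assert (Hdd3 : 3 * d <= b - a). { unfold d. assert (Rmin (Rmin d1 d2) (b - a) <= b - a) by apply Rmin_r. lra. }
  destruct (MVT_gen phi (a + d) (b - d) df) as [c [Hc1 Hc2]].
  - intros x Hx. rewrite Rmin_left in Hx by lra. rewrite Rmax_right in Hx by lra.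
    apply Hd. lra.
  - intros x Hx. rewrite Rmin_left in Hx by lra. rewrite Rmax_right in Hx by lra.
    apply continuity_pt_filterlim. apply (@ex_derive_continuous R_AbsRing R_NormedModule). eexists. apply Hd. lra.
  - rewrite Rmin_left in Hc1 by lra. rewrite Rmax_right in Hc1 by lra.
    destruct (Hd c ltac:(lra)) as [_ Hdc].
    assert (E1 : Rabs (phi (a + d) - phi a) < eps) by (apply H1; [lra | rewrite Rabs_right; lra]).
    assert (E2 : Rabs (phi (b - d) - phi b) < eps) by (apply H2; [lra | rewrite Rabs_left; lra]).
    assert (E3 : Rabs (phi (b - d) - phi (a + d)) <= B * (b - a)).
    { rewrite Hc2, Rabs_mult, (Rabs_right (b - d - (a + d))) by lra.
      apply Rle_trans with (B * (b - d - (a + d))). apply Rmult_le_compat_r; lra. nra. }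
    assert (Rabs (phi b - phi a) <= Rabs (phi (b - d) - phi b) + Rabs (phi (b - d) - phi (a + d)) + Rabs (phi (a + d) - phi a)).
    { replace (phi b - phi a) with (- (phi (b - d) - phi b) + (phi (b - d) - phi (a + d)) + (phi (a + d) - phi a)) by ring.
      eapply Rle_trans. apply Rabs_triang. rewrite <- Rabs_Ropp with (x := phi (b-d) - phi b).
      apply Rplus_le_compat_r. apply Rabs_triang. }
    unfold eps in *. lra.
Qed.

Definition Tay (M : nat) (g : R -> R) (t : R) : R :=
  sum_f_R0 (fun j => (t - 0) ^ j / INR (fact j) * Derive_n g j 0) (M - 1).

Lemma sumf_isP (c : nat -> R) n : isP (S n) (fun t => sum_f_R0 (fun j => (t - 0) ^ j / INR (fact j) * c j) n).
Proof.
  induction n; simpl.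
  - exists (fun _ => 0), (1 / 1 * c 0%nat). split; [simpl; auto|]. intros; ring.
  - change (isP (S (S n)) (fun t => sum_f_R0 (fun j => (t - 0) ^ j / INR (fact j) * c j) n +
      (t - 0) ^ S n / INR (fact (S n)) * c (S n))).
    apply isP_add. apply isP_S; auto.
    apply isP_ext with (fun t => (/ INR (fact (S n)) * c (S n)) * t ^ (S n)).
    apply isP_scal. apply isP_pow. intros. rewrite Rminus_0_r. unfold Rdiv. ring.
Qed.

Lemma Tay_isP M g : (1 <= M)%nat -> isP M (Tay M g).
Proof.
  intros HM. unfold Tay. replace M with (S (M - 1)) at 1 by lia. apply sumf_isP.
Qed.

Lemma Tay_0 M g : Tay M g 0 = g 0.
Proof.
  unfold Tay. induction (M - 1)%nat.
  - simpl. field.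
  - simpl. rewrite IHn. rewrite Rminus_0_r, Rmult_0_l. unfold Rdiv. ring.
Qed.

Lemma Tay_bound M g h K : (1 <= M)%nat -> CM_R M g -> 0 < h ->
  (forall t, 0 <= t <= h -> Rabs (Derive_n g M t) <= K) ->
  forall t, 0 <= t <= h -> Rabs (g t - Tay M g t) <= K * h ^ M / INR (fact M).
Proof.
  intros HM [Hd _] Hh HK t Ht.
  assert (HK0 : 0 <= K). { apply Rle_trans with (2 := HK 0 ltac:(lra)). apply Rabs_pos. }
  assert (Hf : 0 < INR (fact M)) by (apply lt_0_INR, lt_O_fact).
  destruct (Req_dec t 0) as [E|E].
  { subst. rewrite Tay_0, Rminus_diag, Rabs_R0. apply Rmult_le_pos; [|left; apply Rinv_0_lt_compat; auto].
    apply Rmult_le_pos; auto. apply pow_le; lra. }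
  destruct (Taylor_Lagrange g (M - 1) 0 t ltac:(lra)) as [z [Hz Ez]].
  { intros; apply Hd; lia. }
  replace (S (M - 1)) with M in Ez by lia.
  unfold Tay. rewrite Ez.
  match goal with |- Rabs (?A + ?B - ?A) <= _ => replace (A + B - A) with B by ring end.
  rewrite Rminus_0_r. unfold Rdiv. rewrite !Rabs_mult, <- RPow_abs, Rabs_right with (r := / INR (fact M)).
  2: { left; apply Rinv_0_lt_compat; auto. }
  assert (Rabs t ^ M <= h ^ M). { apply pow_incr. rewrite Rabs_right; lra. }
  assert (Rabs (Derive_n g M z) <= K) by (apply HK; lra).
  assert (0 < / INR (fact M)) by (apply Rinv_0_lt_compat; auto).
  assert (0 <= Rabs t ^ M) by (apply pow_le, Rabs_pos).
  assert (0 <= Rabs (Derive_n g M z)) by apply Rabs_pos.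
  replace (K * h ^ M * / INR (fact M)) with (h ^ M * / INR (fact M) * K) by ring.
  apply Rmult_le_compat; auto. apply Rmult_le_pos; lra. apply Rmult_le_compat_r; lra.
Qed.

Lemma sum1_plus F G k : sum1 (fun m => F m + G m) k = sum1 F k + sum1 G k.
Proof. induction k; simpl; [ring|rewrite IHk; ring]. Qed.

Lemma sum1_scal c F k : c * sum1 F k = sum1 (fun m => c * F m) k.
Proof. induction k; simpl; [ring|rewrite <- IHk; ring]. Qed.

Lemma sum1_abs F k : Rabs (sum1 F k) <= sum1 (fun m => Rabs (F m)) k.
Proof.
  induction k; simpl. rewrite Rabs_R0; lra.
  eapply Rle_trans. apply Rabs_triang. lra.
Qed.

Lemma sum1_le F G k : (forall m, (1 <= m <= k)%nat -> F m <= G m) -> sum1 F k <= sum1 G k.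
Proof.
  induction k; intros H; simpl. lra.
  apply Rplus_le_compat. apply IHk; intros; apply H; lia. apply H; lia.
Qed.

Lemma sum1_nonneg F k : (forall m, (1 <= m <= k)%nat -> 0 <= F m) -> 0 <= sum1 F k.
Proof.
  intros H. apply Rle_trans with (sum1 (fun _ => 0) k).
  clear. induction k; simpl; lra. apply sum1_le; auto.
Qed.

Lemma isP_exRInt k p a b : isP k p -> ex_RInt p a b.
Proof. intros H. apply (@ex_RInt_continuous R_CompleteNormedModule). intros; apply (isP_cont k); auto. Qed.

Lemma RInt_sum1 M xi (c : nat -> R) a b k : (k <= M)%nat ->
  RInt (fun x => sum1 (fun m => c m * lagrange M xi m x) k) a b
  = sum1 (fun m => c m * RInt (lagrange M xi m) a b) k.
Proof.
  induction k; intros Hk.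
  - simpl. rewrite (@RInt_const R_CompleteNormedModule). simpl. change (scal (b - a) 0) with ((b - a) * 0). ring.
  - transitivity (RInt (fun x => plus (sum1 (fun m => c m * lagrange M xi m x) k)
                      (scal (c (S k)) (lagrange M xi (S k) x))) a b).
    { apply RInt_ext; intros; reflexivity. }
    rewrite (@RInt_plus R_CompleteNormedModule), (@RInt_scal R_CompleteNormedModule).
    + simpl. rewrite IHk by lia. reflexivity.
    + apply (isP_exRInt M). apply lagrange_isP; lia.
    + apply (isP_exRInt M). apply (sum1_isP k (fun m x => c m * lagrange M xi m x)).
      intros; apply isP_scal, lagrange_isP; lia.
    + apply (isP_exRInt M). apply (isP_ext M (fun x => c (S k) * lagrange M xi (S k) x)).
      apply isP_scal, lagrange_isP; lia. intros; reflexivity.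
Qed.

Lemma quad_exact M xi p a b : nodes_ok M xi -> isP M p ->
  sum1 (fun m => RInt (lagrange M xi m) a b * p (xi m)) M = RInt p a b.
Proof.
  intros Hn Hp.
  rewrite (sum1_ext _ (fun m => p (xi m) * RInt (lagrange M xi m) a b)) by (intros; ring).
  rewrite <- RInt_sum1 by lia. apply RInt_ext. intros x _. apply lagrange_reprod; auto.
Qed.

Lemma local_err M xi h K (y g : R -> R) a b :
  nodes_ok M xi -> 0 < h -> CM_R M g ->
  (forall t, 0 <= t <= h -> filterlim y (within (fun s => 0 <= s <= h) (locally t)) (locally (y t))) ->
  (forall t, 0 < t < h -> is_derive y t (g t)) ->
  (forall t, 0 <= t <= h -> Rabs (Derive_n g M t) <= K) ->
  0 <= a <= 1 -> 0 <= b <= 1 ->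
  Rabs (h * sum1 (fun m => RInt (lagrange M xi m) a b * g (xi m * h)) M - (y (b * h) - y (a * h)))
  <= h * (sum1 (fun m => Rabs (RInt (lagrange M xi m) a b)) M + 1) * (K * h ^ M / INR (fact M)).
Proof.
  intros Hn Hh HCM Hyc Hyd HK Ha Hb.
  assert (HM : (1 <= M)%nat) by (destruct Hn; auto).
  set (E := K * h ^ M / INR (fact M)).
  set (T := Tay M g).
  assert (HT : isP M T) by (apply Tay_isP; auto).
  assert (HTe : forall t, 0 <= t <= h -> Rabs (g t - T t) <= E) by (intros; apply Tay_bound; auto).
  assert (HE : 0 <= E) by (apply Rle_trans with (2 := HTe 0 ltac:(lra)); apply Rabs_pos).
  set (w := fun m => RInt (lagrange M xi m) a b).
  assert (Hxr : forall m, (1 <= m <= M)%nat -> 0 <= xi m * h <= h).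
  { intros m Hm. destruct (nodes_range M xi Hn m Hm). split; nra. }
  assert (EA : sum1 (fun m => w m * g (xi m * h)) M =
               sum1 (fun m => w m * T (xi m * h)) M + sum1 (fun m => w m * (g (xi m * h) - T (xi m * h))) M).
  { rewrite <- sum1_plus. apply sum1_ext. intros; ring. }
  assert (EAb : Rabs (sum1 (fun m => w m * (g (xi m * h) - T (xi m * h))) M) <= sum1 (fun m => Rabs (w m)) M * E).
  { eapply Rle_trans. apply sum1_abs. rewrite Rmult_comm, sum1_scal. apply sum1_le.
    intros m Hm. rewrite Rabs_mult. rewrite Rmult_comm. apply Rmult_le_compat_r. apply Rabs_pos. apply HTe; auto. }
  assert (HpT : isP M (fun x => T (x * h))).
  { apply (isP_ext M (fun x => T (h * x))). apply isP_comp; auto. intros; rewrite Rmult_comm; auto. }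
  assert (EB : sum1 (fun m => w m * T (xi m * h)) M = RInt (fun x => T (x * h)) a b).
  { unfold w. apply (quad_exact M xi (fun x => T (x * h))); auto. }
  assert (EC : h * RInt (fun x => T (x * h)) a b = RInt T (a * h) (b * h)).
  { transitivity (scal h (RInt (fun x => T (x * h)) a b)). reflexivity.
    rewrite <- (@RInt_scal R_CompleteNormedModule) by (apply (isP_exRInt M); auto).
    rewrite (RInt_ext _ (fun y => scal h (T (h * y + 0)))).
    2: { intros x _. f_equal. f_equal. ring. }
    rewrite (@RInt_comp_lin R_CompleteNormedModule) by (apply (isP_exRInt M); auto).
    rewrite !Rplus_0_r, (Rmult_comm h a), (Rmult_comm h b). reflexivity. }
  set (G := fun t => RInt T 0 t).
  assert (ED : RInt T (a * h) (b * h) = G (b * h) - G (a * h)).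
  { unfold G. assert (X : @eq R (RInt T 0 (a * h) + RInt T (a * h) (b * h)) (RInt T 0 (b * h))).
    { apply (@RInt_Chasles R_CompleteNormedModule T 0 (a * h) (b * h)); apply (isP_exRInt M); auto. }
    change (@eq R (RInt T (a * h) (b * h)) (RInt T 0 (b * h) - RInt T 0 (a * h))). rewrite <- X. apply (fun u v : R => eq_sym (Rplus_minus_l u v) : v = u + v - u). }
  assert (HGd : forall t, is_derive G t (T t)).
  { intros t. apply (@is_derive_RInt R_NormedModule T G 0 t).
    apply filter_forall. intros x. apply (@RInt_correct R_CompleteNormedModule). apply (isP_exRInt M); auto.
    apply (isP_cont M); auto. }
  set (psi := fun t => y t - G t).
  assert (Hpsi : forall u v, 0 <= u <= v -> v <= h -> Rabs (psi v - psi u) <= E * (v - u)).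
  { intros u v Huv Hvh. apply (mvt_bound psi (fun t => g t - T t)); [lra| |].
    - intros x Hx eps Heps.
      destruct (within_eps y _ x (Hyc x ltac:(lra)) (eps / 2) ltac:(lra)) as [d1 [Hd1 H1]].
      destruct (cont_eps G x (@ex_derive_continuous R_AbsRing R_NormedModule G x (ex_intro _ _ (HGd x))) (eps / 2) ltac:(lra)) as [d2 [Hd2 H2]].
      exists (Rmin d1 d2). split. apply Rmin_pos; auto.
      intros s Hs Hsx. unfold psi.
      assert (Rabs (y s - y x) < eps / 2). { apply H1. lra. apply Rlt_le_trans with (1 := Hsx), Rmin_l. }
      assert (Rabs (G s - G x) < eps / 2). { apply H2. apply Rlt_le_trans with (1 := Hsx), Rmin_r. }
      replace (y s - G s - (y x - G x)) with ((y s - y x) + - (G s - G x)) by ring.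
      eapply Rle_lt_trans. apply Rabs_triang. rewrite Rabs_Ropp. lra.
    - intros x Hx. split.
      + apply (is_derive_minus y G x (g x) (T x)). apply Hyd; lra. apply HGd.
      + apply HTe; lra. }
  assert (HpsiE : Rabs (psi (b * h) - psi (a * h)) <= E * h).
  { destruct (Rle_dec a b).
    - eapply Rle_trans. apply Hpsi; nra. apply Rmult_le_compat_l; auto. nra.
    - rewrite <- Rabs_Ropp. replace (- (psi (b * h) - psi (a * h))) with (psi (a * h) - psi (b * h)) by ring.
      eapply Rle_trans. apply Hpsi; nra. apply Rmult_le_compat_l; auto. nra. }
  change (sum1 (fun m => RInt (lagrange M xi m) a b * g (xi m * h)) M) with (sum1 (fun m => w m * g (xi m * h)) M).
  change (sum1 (fun m => Rabs (RInt (lagrange M xi m) a b)) M) with (sum1 (fun m => Rabs (w m)) M).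
  fold E.
  rewrite EA, Rmult_plus_distr_l, EB, EC, ED.
  replace (G (b * h) - G (a * h) + h * sum1 (fun m => w m * (g (xi m * h) - T (xi m * h))) M - (y (b * h) - y (a * h)))
    with (h * sum1 (fun m => w m * (g (xi m * h) - T (xi m * h))) M + - (psi (b * h) - psi (a * h))) by (unfold psi; ring).
  eapply Rle_trans. apply Rabs_triang. rewrite Rabs_Ropp, Rabs_mult, (Rabs_right h) by lra.
  assert (h * Rabs (sum1 (fun m => w m * (g (xi m * h) - T (xi m * h))) M) <= h * (sum1 (fun m => Rabs (w m)) M * E)).
  { apply Rmult_le_compat_l; lra. }
  lra.
Qed.

Lemma xiR_range M xi : nodes_ok M xi -> forall n, (n <= num_sub M xi)%nat -> 0 <= xiR M xi n <= 1.
Proof.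
  intros Hn n Hnle. pose proof Hn as [HM _].
  unfold xiR.
  destruct (Nat.eqb_spec n 0). lra.
  destruct (Nat.eqb_spec n (num_sub M xi)). lra.
  unfold num_sub in *.
  destruct (zero_is_node xi) eqn:Z.
  - apply (nodes_range M); auto. destruct (one_is_node M xi); lia.
  - apply (nodes_range M); auto. destruct (one_is_node M xi); lia.
Qed.

Lemma maxabs1_nonneg F k : 0 <= maxabs1 F k.
Proof. induction k; simpl. lra. eapply Rle_trans. apply IHk. apply Rmax_l. Qed.

Lemma maxabs1_ge F k i : (1 <= i <= k)%nat -> Rabs (F i) <= maxabs1 F k.
Proof.
  induction k; intros Hi. lia. simpl.
  destruct (Nat.eq_dec i (S k)). subst. apply Rmax_r.
  eapply Rle_trans. apply IHk; lia. apply Rmax_l.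
Qed.

Lemma sum1_ge_term F k i : (forall m, (1 <= m <= k)%nat -> 0 <= F m) -> (1 <= i <= k)%nat -> F i <= sum1 F k.
Proof.
  induction k; intros H Hi. lia. simpl.
  destruct (Nat.eq_dec i (S k)).
  - subst. assert (0 <= sum1 F k) by (apply sum1_nonneg; intros; apply H; lia). lra.
  - assert (F i <= sum1 F k) by (apply IHk; [intros; apply H; lia | lia]).
    assert (0 <= F (S k)) by (apply H; lia). lra.
Qed.

Lemma inv_le_exp u : 0 <= u -> 2 * u < 1 -> / (1 - u) <= exp (2 * u).
Proof.
  intros H1 H2. assert (E := exp_ineq1_le (2 * u)).
  apply Rmult_le_reg_l with (1 - u). lra. rewrite Rinv_r by lra. nra.
Qed.

Lemma pow_exp A u n : 0 <= A -> A <= exp u -> A ^ n <= exp (INR n * u).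
Proof.
  intros H0 H1. induction n. simpl. rewrite Rmult_0_l, exp_0. lra.
  rewrite S_INR. replace ((INR n + 1) * u) with (INR n * u + u) by ring. rewrite exp_plus.
  simpl. rewrite Rmult_comm. apply Rmult_le_compat; auto. apply pow_le; auto.
Qed.

Lemma exp_le a b : a <= b -> exp a <= exp b.
Proof. intros [H|H]. left; apply exp_increasing; auto. subst; lra. Qed.

Lemma abs5 a b c d t : Rabs (a + b - c + d + t) <= Rabs a + Rabs b + Rabs c + Rabs d + Rabs t.
Proof.
  unfold Rminus. eapply Rle_trans. apply Rabs_triang. apply Rplus_le_compat_r.
  eapply Rle_trans. apply Rabs_triang. apply Rplus_le_compat_r.
  eapply Rle_trans. apply Rabs_triang. rewrite Rabs_Ropp. apply Rplus_le_compat_r.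
  apply Rabs_triang.
Qed.

Theorem corollary2 :
  forall (M : nat) (xi : nat -> R), nodes_ok M xi ->
  forall (L K : R), 0 <= L ->
  exists C1 C2 : R,
  forall (h y0 : R) (y f g : R -> R),
    0 < h ->
    2 * h * L < 1 ->
    (forall a b, Rabs (f a - f b) <= L * Rabs (a - b)) ->
    y 0 = y0 ->
    (forall t, 0 <= t <= h ->
       filterlim y (within (fun s => 0 <= s <= h) (locally t)) (locally (y t))) ->
    (forall t, 0 < t < h -> is_derive y t (f (y t))) ->
    CM_R M g ->
    (forall t, 0 <= t <= h -> g t = f (y t)) ->
    (forall t, 0 <= t <= h -> Rabs (Derive_n g M t) <= K) ->
  forall (etap : R -> R) (eta0 : R) (etanew : nat -> R),
    etanew 0%nat = eta0 ->
    (forall n, (1 <= n <= num_sub M xi)%nat ->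
       etanew n = etanew (n - 1)%nat
                  + hstep M xi h n * (f (etanew n) - f (etap (tgrid M xi h n)))
                  + h * sum1 (fun m => weight M xi n m * f (etap (xi m * h))) M) ->
  forall n, (1 <= n <= num_sub M xi)%nat ->
    Rabs (etanew n - y (tgrid M xi h n))
      <= exp (2 * INR (num_sub M xi) * h * L) * Rabs (eta0 - y0)
         + C1 * h * err_norm M xi h etap y
         + C2 * h ^ (M + 1).
Proof.
  intros M xi Hn L K HL.
  set (N := num_sub M xi).
  set (Wn := fun n => sum1 (fun m => Rabs (weight M xi n m)) M).
  set (Wt := sum1 Wn N).
  assert (HWn0 : forall n, 0 <= Wn n) by (intros; apply sum1_nonneg; intros; apply Rabs_pos).
  assert (HWt : forall n, (1 <= n <= N)%nat -> Wn n <= Wt) by (intros; apply sum1_ge_term; auto).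
  assert (HWt0 : 0 <= Wt) by (apply sum1_nonneg; auto).
  set (C := 2 ^ N * INR N * (1 + Wt)).
  exists (C * L), (C * K / INR (fact M)).
  intros h y0 y f g Hh HhL Hlip Hy0 Hyc Hyd HCM Hgf HK etap eta0 etanew H0 Hrec.
  assert (HM : (1 <= M)%nat) by (destruct Hn; auto).
  assert (HK0 : 0 <= K) by (apply Rle_trans with (2 := HK 0 ltac:(lra)); apply Rabs_pos).
  assert (Hf : 0 < INR (fact M)) by (apply lt_0_INR, lt_O_fact).
  set (E := K * h ^ M / INR (fact M)).
  assert (HE : 0 <= E).
  { unfold E. apply Rmult_le_pos. apply Rmult_le_pos; auto. apply pow_le; lra. left; apply Rinv_0_lt_compat; auto. }
  set (eps := err_norm M xi h etap y).
  assert (Heps0 : 0 <= eps) by (unfold eps, err_norm; eapply Rle_trans; [apply maxabs1_nonneg|apply Rmax_l]).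
  assert (Hepsm : forall m, (1 <= m <= M)%nat -> Rabs (etap (xi m * h) - y (xi m * h)) <= eps).
  { intros m Hm. unfold eps, err_norm. eapply Rle_trans; [|apply Rmax_l].
    apply (maxabs1_ge (fun m => etap (xi m * h) - y (xi m * h))); auto. }
  assert (Hepsn : forall n, (1 <= n <= N)%nat -> Rabs (etap (tgrid M xi h n) - y (tgrid M xi h n)) <= eps).
  { intros k Hk. unfold eps, err_norm. eapply Rle_trans; [|apply Rmax_r].
    apply (maxabs1_ge (fun n => etap (tgrid M xi h n) - y (tgrid M xi h n))); auto. }
  assert (Hygd : forall t, 0 < t < h -> is_derive y t (g t)).
  { intros t Ht. rewrite Hgf by lra. apply Hyd; auto. }
  set (Sb := h * (1 + Wt) * (L * eps + E)).
  assert (HS : 0 <= Sb).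
  { unfold Sb. apply Rmult_le_pos. apply Rmult_le_pos; lra. apply Rplus_le_le_0_compat; auto. nra. }
  set (e := fun n => etanew n - y (tgrid M xi h n)).
  assert (Hxm : forall m, (1 <= m <= M)%nat -> 0 <= xi m * h <= h).
  { intros m Hm. destruct (nodes_range M xi Hn m Hm). split; nra. }
  assert (Hstep : forall n, (1 <= n <= N)%nat -> (1 - h * L) * Rabs (e n) <= Rabs (e (n - 1)%nat) + Sb).
  { intros n Hnn.
    set (a := xiR M xi (n - 1)). set (b := xiR M xi n).
    assert (Ha : 0 <= a <= 1) by (apply xiR_range; auto; lia).
    assert (Hb : 0 <= b <= 1) by (apply xiR_range; auto; lia).
    assert (Hloc := local_err M xi h K y g a b Hn Hh HCM Hyc Hygd HK Ha Hb).
    fold E in Hloc.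
    change (sum1 (fun m => Rabs (RInt (lagrange M xi m) a b)) M) with (Wn n) in Hloc.
    change (sum1 (fun m => RInt (lagrange M xi m) a b * g (xi m * h)) M) with
      (sum1 (fun m => weight M xi n m * g (xi m * h)) M) in Hloc.
    set (tau := h * sum1 (fun m => weight M xi n m * g (xi m * h)) M - (y (b * h) - y (a * h))) in Hloc.
    set (D := sum1 (fun m => weight M xi n m * (f (etap (xi m * h)) - f (y (xi m * h)))) M).
    assert (ED : sum1 (fun m => weight M xi n m * f (etap (xi m * h))) M
                 = sum1 (fun m => weight M xi n m * g (xi m * h)) M + D).
    { unfold D. rewrite <- sum1_plus. apply sum1_ext. intros m Hm. rewrite Hgf by (apply Hxm; auto). ring. }
    assert (HD : Rabs D <= Wn n * (L * eps)).
    { unfold D, Wn. eapply Rle_trans. apply sum1_abs. rewrite Rmult_comm, sum1_scal. apply sum1_le.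
      intros m Hm. rewrite Rabs_mult, Rmult_comm. apply Rmult_le_compat_r. apply Rabs_pos.
      eapply Rle_trans. apply Hlip. apply Rmult_le_compat_l; auto. }
    set (hs := hstep M xi h n).
    assert (Hhs : Rabs hs <= h).
    { unfold hs, hstep. fold a b. rewrite Rabs_mult, (Rabs_right h) by lra.
      assert (Rabs (b - a) <= 1) by (apply Rabs_le; lra). nra. }
    assert (Ee : e n = e (n - 1)%nat + hs * (f (etanew n) - f (y (tgrid M xi h n)))
                  - hs * (f (etap (tgrid M xi h n)) - f (y (tgrid M xi h n))) + h * D + tau).
    { unfold e, tau. rewrite Hrec at 1 by auto. fold hs. rewrite ED.
      unfold tgrid. fold a b. ring. }
    assert (B1 : Rabs (hs * (f (etanew n) - f (y (tgrid M xi h n)))) <= h * L * Rabs (e n)).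
    { rewrite Rabs_mult. assert (X := Hlip (etanew n) (y (tgrid M xi h n))).
      fold (e n) in X. assert (0 <= Rabs (f (etanew n) - f (y (tgrid M xi h n)))) by apply Rabs_pos.
      assert (0 <= Rabs (e n)) by apply Rabs_pos.
      apply Rle_trans with (h * Rabs (f (etanew n) - f (y (tgrid M xi h n)))). apply Rmult_le_compat_r; auto.
      rewrite Rmult_assoc. apply Rmult_le_compat_l; lra. }
    assert (B2 : Rabs (hs * (f (etap (tgrid M xi h n)) - f (y (tgrid M xi h n)))) <= h * (L * eps)).
    { rewrite Rabs_mult. assert (X := Hlip (etap (tgrid M xi h n)) (y (tgrid M xi h n))).
      assert (X2 := Hepsn n Hnn).
      apply Rmult_le_compat; auto using Rabs_pos. eapply Rle_trans. apply X. apply Rmult_le_compat_l; auto. }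
    assert (B3 : Rabs (h * D) <= h * (Wn n * (L * eps))).
    { rewrite Rabs_mult, Rabs_right by lra. apply Rmult_le_compat_l; lra. }
    assert (Htri : Rabs (e n) <= Rabs (e (n - 1)%nat) + h * L * Rabs (e n) + h * (L * eps)
                      + h * (Wn n * (L * eps)) + h * (Wn n + 1) * E).
    { rewrite Ee at 1. eapply Rle_trans. apply abs5. lra. }
    assert (HWn := HWt n Hnn).
    assert (h * (1 + Wn n) * (L * eps + E) <= Sb).
    { unfold Sb. apply Rmult_le_compat_r. nra. apply Rmult_le_compat_l; lra. }
    nra. }
  set (A := / (1 - h * L)).
  assert (HA1 : 1 <= A).
  { unfold A. rewrite <- Rinv_1. apply Rinv_le_contravar. nra. nra. }
  assert (HA2 : A <= 2).
  { unfold A. replace 2 with (/ (1/2)) by field. apply Rinv_le_contravar. lra. nra. }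
  assert (HAe : A <= exp (2 * (h * L))) by (apply inv_le_exp; nra).
  assert (Hind : forall n, (n <= N)%nat -> Rabs (e n) <= A ^ n * (Rabs (eta0 - y0) + INR n * Sb)).
  { induction n; intros Hn'.
    - simpl. unfold e. rewrite H0. unfold tgrid, xiR. simpl. rewrite Rmult_0_l, Hy0. lra.
    - assert (X := Hstep (S n) ltac:(lia)). replace (S n - 1)%nat with n in X by lia.
      assert (IH := IHn ltac:(lia)).
      assert (Hpos : 0 < 1 - h * L) by nra.
      assert (Rabs (e (S n)) <= A * (Rabs (e n) + Sb)).
      { unfold A. apply Rmult_le_reg_l with (1 - h * L); auto. rewrite <- Rmult_assoc, Rinv_r by lra. lra. }
      assert (HAn : 1 <= A ^ n) by (apply pow_R1_Rle; lra).
      rewrite S_INR. simpl pow.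
      assert (0 <= Rabs (eta0 - y0)) by apply Rabs_pos.
      assert (0 <= INR n) by apply pos_INR.
      apply Rle_trans with (A * (A ^ n * (Rabs (eta0 - y0) + INR n * Sb) + Sb)). apply Rle_trans with (1 := H).
      apply Rmult_le_compat_l; lra.
      assert (A * Sb <= A * (A ^ n * Sb)) by (apply Rmult_le_compat_l; nra).
      nra. }
  intros n Hnn.
  assert (X := Hind n ltac:(lia)). fold (e n).
  assert (HAn1 : A ^ n <= exp (2 * INR N * h * L)).
  { eapply Rle_trans. apply (pow_exp A (2 * (h * L))); lra. apply exp_le.
    assert (INR n <= INR N) by (apply le_INR; lia). assert (0 <= h * L) by nra.
    replace (2 * INR N * h * L) with (INR N * (2 * (h * L))) by ring. apply Rmult_le_compat_r; lra. }
  assert (HAn2 : A ^ n <= 2 ^ N).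
  { apply Rle_trans with (2 ^ n). apply pow_incr; lra. apply Rle_pow; lra || lia. }
  assert (HnN : INR n <= INR N) by (apply le_INR; lia).
  assert (A ^ n * (INR n * Sb) <= 2 ^ N * (INR N * Sb)).
  { apply Rmult_le_compat; auto. apply pow_le; lra. apply Rmult_le_pos; auto; apply pos_INR.
    apply Rmult_le_compat_r; auto. }
  assert (A ^ n * Rabs (eta0 - y0) <= exp (2 * INR N * h * L) * Rabs (eta0 - y0)).
  { apply Rmult_le_compat_r; auto. apply Rabs_pos. }
  assert (E2 : 2 ^ N * (INR N * Sb) = C * L * h * eps + C * K / INR (fact M) * h ^ (M + 1)).
  { unfold Sb, C, E. rewrite pow_add. simpl. field. lra. }
  fold N eps. lra.
Qed.
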